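(* Let $k\geq1$. The variety $\mathbf N_k$ is finitely generated (generated by a single finite algebra) if and only if $k\leq 3$.
   Context: $S_7$ is the ai-semiring on $\{\infty,a,1\}$ with $x+x=x$, $x+y=\infty$ for $x\neq y$, and commutative multiplication with $\infty$ a zero, $a\cdot a=\infty$, $a\cdot 1=a$, $1\cdot1=1$. $\mathbf N$ is the subvariety of $\mathsf V(S_7)$ defined by the identity $x^2y\approx x^2$, and for $k\geq1$, $\mathbf N_k$ is the subvariety of $\mathbf N$ defined by the identity $x_1\cdots x_k\approx y_1\cdots y_k$ (with $x_1,\dots,x_k,y_1,\dots,y_k$ distinct variables). *)

(* Defs.v *)
From mathcomp Require Import all_boot.

Set Implicit Arguments.
Unset Strict Implicit.
Unset Printing Implicit Defensive.

Record alg := Alg {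
  car :> Type;
  aadd : car -> car -> car;
  amul : car -> car -> car
}.

Inductive term : Type :=
| Var : nat -> term
| Add : term -> term -> term
| Mul : term -> term -> term.

Fixpoint eval (A : alg) (v : nat -> A) (t : term) : A :=
  match t with
  | Var n => v n
  | Add s u => @aadd A (eval v s) (eval v u)
  | Mul s u => @amul A (eval v s) (eval v u)
  end.

Definition sat (A : alg) (s t : term) : Prop :=
  forall v : nat -> A, eval v s = eval v t.

Inductive s7 := S7inf | S7a | S7one.

Definition s7_eqb (x y : s7) : bool :=
  match x, y with
  | S7inf, S7inf | S7a, S7a | S7one, S7one => true
  | _, _ => false
  end.

Definition s7_add (x y : s7) : s7 := if s7_eqb x y then x else S7inf.

Definition s7_mul (x y : s7) : s7 :=
  match x, y with
  | S7one, S7one => S7one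
  | S7a, S7one | S7one, S7a => S7a
  | _, _ => S7inf
  end.

Definition S7 : alg := Alg s7_add s7_mul.

(* Membership in V(S_7): satisfying every identity of S_7 (Birkhoff). *)
Definition in_VS7 (A : alg) : Prop :=
  forall s t : term, sat S7 s t -> sat A s t.

Definition in_N (A : alg) : Prop :=
  in_VS7 A /\
  sat A (Mul (Mul (Var 0) (Var 0)) (Var 1)) (Mul (Var 0) (Var 0)).

(* prodv s n = x_s x_{s+1} ... x_{s+n}  (product of n+1 distinct variables) *)
Fixpoint prodv (s n : nat) : term :=
  match n with
  | 0 => Var s
  | n'.+1 => Mul (prodv s n') (Var (s + n'.+1))
  end.

(* N_k (k >= 1): subvariety of N defined by x_1...x_k ~ y_1...y_k,
   with x_i := Var (i-1) and y_i := Var (k+i-1), all distinct. *)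
Definition in_Nk (k : nat) (A : alg) : Prop :=
  in_N A /\ sat A (prodv 0 k.-1) (prodv k k.-1).

Definition in_V (B A : alg) : Prop :=
  forall s t : term, sat B s t -> sat A s t.

Definition fin_generated (K : alg -> Prop) : Prop :=
  exists (T : finType) (ad mu : T -> T -> T),
    forall A : alg, K A <-> in_V (@Alg T ad mu) A.

(* Main.v *)
From HB Require Import structures.
From mathcomp Require Import all_boot all_order all_algebra zify.
Require Import Defs.
From Stdlib Require Import FunctionalExtensionality Classical.
Import Order.TTheory GRing.Theory Num.Theory.


Lemma s7_eqP : Equality.axiom s7_eqb.
Proof. by case; case; constructor. Qed.
HB.instance Definition _ := hasDecEq.Build s7 s7_eqP.

Definition isInf (y : s7) := if y is S7inf then true else false.

Definition wS {n : nat} (wt : 'I_n.+1 -> int) (W : {set 'I_n.+1}) : int :=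
  (\sum_(c in W) wt c)%R.

Lemma wSU {n} wt (W V : {set 'I_n.+1}) : [disjoint W & V] ->
  wS wt (W :|: V) = (wS wt W + wS wt V)%R.
Proof.
move=> d; rewrite /wS -bigU //; apply: eq_bigl => c; by rewrite !inE.
Qed.

Lemma wS0 {n} wt : wS wt (set0 : {set 'I_n.+1}) = 0%R.
Proof. by rewrite /wS big_set0. Qed.

Definition goodW {n} wt (K : int) (W : {set 'I_n.+1}) : bool :=
  (0 < wS wt W)%R && (wS wt W <= K)%R.

Definition validO {n} wt K (o : option {set 'I_n.+1}) : bool :=
  if o is Some W then goodW wt K W else true.

Definition qT {n} wt K := {o : option {set 'I_n.+1} | validO wt K o}.

Definition q0 {n} wt K : @qT n wt K := exist _ None isT.
Definition mk {n} wt K (o : option {set 'I_n.+1}) : qT wt K := insubd (q0 wt K) o.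

Definition addq {n} wt K (x y : @qT n wt K) : qT wt K :=
  if val x == val y then x else q0 wt K.
Definition mulq {n} wt K (x y : @qT n wt K) : qT wt K :=
  mk wt K (match val x, val y with
           | Some W, Some V => if [disjoint W & V] then Some (W :|: V) else None
           | _, _ => None end).

Definition Qalg {n} wt K : alg := @Alg (@qT n wt K) (addq wt K) (mulq wt K).

Definition vec {n} wt K (x : @qT n wt K) : 'I_n.+1 -> s7 :=
  fun c => match val x with None => S7inf | Some W => if c \in W then S7a else S7one end.

Definition aset {n} (u : 'I_n.+1 -> s7) : {set 'I_n.+1} := [set c | u c == S7a].

Definition piq {n} wt K (u : 'I_n.+1 -> s7) : qT wt K :=
  if [exists c, isInf (u c)] then q0 wt K else mk wt K (Some (aset u)).

Definition Rinv {n} wt (u : 'I_n.+1 -> s7) : bool :=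
  [exists c, isInf (u c)] || (0 < wS wt (aset u))%R.

Set Implicit Arguments.
Unset Strict Implicit.

Lemma val_mk n wt K o : val (@mk n wt K o) = if validO wt K o then o else None.
Proof. by rewrite /mk val_insubd. Qed.

Lemma mk_val n wt K (x : @qT n wt K) : mk wt K (val x) = x.
Proof. by apply: val_inj; rewrite val_mk (valP x). Qed.

Lemma noinf {n} (u : 'I_n.+1 -> s7) : ~~ [exists c, isInf (u c)] ->
  forall c, u c = if c \in aset u then S7a else S7one.
Proof.
move=> /existsPn H c; move: (H c); rewrite inE; by case: (u c).
Qed.

Lemma vecR n wt K (x : @qT n wt K) : Rinv wt (vec wt K x).
Proof.
rewrite /Rinv /vec; case: x => [[W|] /= Hv].
  apply/orP; right; move: Hv => /andP[H _].
  suff -> : aset (fun c => if c \in W then S7a else S7one) = W by [].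
  by apply/setP => c; rewrite inE; case: (c \in W).
by apply/orP; left; apply/existsP; exists ord0.
Qed.

Lemma pi_vec n wt K (x : @qT n wt K) : piq wt K (vec wt K x) = x.
Proof.
rewrite /piq /vec; case: x => [[W|] /= Hv].
  have -> : [exists c, isInf (if c \in W then S7a else S7one)] = false.
    by apply/existsP => [[c]]; case: (c \in W).
  have -> : aset (fun c => if c \in W then S7a else S7one) = W.
    by apply/setP => c; rewrite inE; case: (c \in W).
  by apply: val_inj; rewrite val_mk /= Hv.
have -> : [exists c : 'I_n.+1, isInf S7inf] by apply/existsP; exists ord0.
by apply: val_inj.
Qed.

Lemma addq0l n wt K (y : @qT n wt K) : addq wt K (q0 wt K) y = q0 wt K.
Proof. by rewrite /addq; case: ifP. Qed.
Lemma addq0r n wt K (y : @qT n wt K) : addq wt K y (q0 wt K) = q0 wt K.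
Proof. rewrite /addq; case: ifP => // /eqP H; by apply: val_inj. Qed.
Lemma mulq0l n wt K (y : @qT n wt K) : mulq wt K (q0 wt K) y = q0 wt K.
Proof. by apply: val_inj; rewrite /mulq val_mk. Qed.
Lemma mulq0r n wt K (y : @qT n wt K) : mulq wt K y (q0 wt K) = q0 wt K.
Proof. apply: val_inj; rewrite /mulq val_mk /=. by case: (val y). Qed.

Lemma piq_inf n wt K (u : 'I_n.+1 -> s7) c : u c = S7inf -> piq wt K u = q0 wt K.
Proof.
move=> H; rewrite /piq; case: ifP => // /existsP []; by exists c; rewrite H.
Qed.

Lemma Rinv_inf n wt (u : 'I_n.+1 -> s7) c : u c = S7inf -> Rinv wt u.
Proof. move=> H; apply/orP; left; apply/existsP; exists c; by rewrite H. Qed.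

Lemma addR n wt K (u v : 'I_n.+1 -> s7) : Rinv wt u -> Rinv wt v ->
  Rinv wt (fun c => s7_add (u c) (v c)) /\
  piq wt K (fun c => s7_add (u c) (v c)) = addq wt K (piq wt K u) (piq wt K v).
Proof.
move=> Ru Rv.
case Iu: [exists c, isInf (u c)].
  case/existsP: Iu => c Hc.
  have Hs : s7_add (u c) (v c) = S7inf by case: (u c) Hc => // _; case: (v c).
  split; first exact: (Rinv_inf wt Hs).
  rewrite (piq_inf wt K Hs) (@piq_inf _ wt K u c); last by case: (u c) Hc.
  by rewrite addq0l.
case Iv: [exists c, isInf (v c)].
  case/existsP: Iv => c Hc.
  have Hs : s7_add (u c) (v c) = S7inf by case: (v c) Hc => // _; case: (u c).
  split; first exact: (Rinv_inf wt Hs).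
  rewrite (piq_inf wt K Hs) (@piq_inf _ wt K v c); last by case: (v c) Hc.
  by rewrite addq0r.
have Hu := noinf (negbT Iu); have Hv := noinf (negbT Iv).
case E: [forall c, u c == v c].
  have Evu : v = u.
    by apply: functional_extensionality => c; move/forallP: E => /(_ c) /eqP.
  subst v.
  have Es : (fun c => s7_add (u c) (u c)) = u.
    by apply: functional_extensionality => c; case: (u c).
  rewrite Es; split => //; by rewrite /addq eqxx.
move/negbT/forallPn: E => [c Hc].
have Hs : s7_add (u c) (v c) = S7inf.
  move: Hc; rewrite (Hu c) (Hv c); by case: (c \in aset u); case: (c \in aset v).
split; first exact: (Rinv_inf wt Hs).
rewrite (piq_inf wt K Hs) /piq Iu Iv.
have Ne : aset u != aset v.
  apply/negP => /eqP Ee; move: Hc; by rewrite (Hu c) (Hv c) Ee eqxx.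
rewrite /addq !val_mk /=.
case Gu: (goodW wt K (aset u)) => /=; case: (goodW wt K (aset v)) => //=.
- by case: eqP => // [[E]]; rewrite E eqxx in Ne.
- by apply: val_inj; rewrite val_mk /= Gu.
Qed.

Lemma aset_set n (W : {set 'I_n.+1}) : aset (fun c => if c \in W then S7a else S7one) = W.
Proof. by apply/setP => c; rewrite inE; case: (c \in W). Qed.

Lemma piq_set n wt K (W : {set 'I_n.+1}) :
  piq wt K (fun c => if c \in W then S7a else S7one) = mk wt K (Some W).
Proof.
rewrite /piq aset_set; case: ifP => // /existsP [c]; by case: (c \in W).
Qed.

Lemma Rinv_set n wt (W : {set 'I_n.+1}) : (0 < wS wt W)%R ->
  Rinv wt (fun c => if c \in W then S7a else S7one).
Proof. by move=> H; rewrite /Rinv aset_set H orbT. Qed.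

Lemma mulR n wt K (u v : 'I_n.+1 -> s7) : Rinv wt u -> Rinv wt v ->
  Rinv wt (fun c => s7_mul (u c) (v c)) /\
  piq wt K (fun c => s7_mul (u c) (v c)) = mulq wt K (piq wt K u) (piq wt K v).
Proof.
move=> Ru Rv.
case Iu: [exists c, isInf (u c)].
  case/existsP: Iu => c Hc.
  have Hs : s7_mul (u c) (v c) = S7inf by case: (u c) Hc => // _; case: (v c).
  split; first exact: (Rinv_inf wt Hs).
  rewrite (piq_inf wt K Hs) (@piq_inf _ wt K u c); last by case: (u c) Hc.
  by rewrite mulq0l.
case Iv: [exists c, isInf (v c)].
  case/existsP: Iv => c Hc.
  have Hs : s7_mul (u c) (v c) = S7inf by case: (v c) Hc => // _; case: (u c).
  split; first exact: (Rinv_inf wt Hs).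
  rewrite (piq_inf wt K Hs) (@piq_inf _ wt K v c); last by case: (v c) Hc.
  by rewrite mulq0r.
have Hu := noinf (negbT Iu); have Hv := noinf (negbT Iv).
have Pu : (0 < wS wt (aset u))%R by move: Ru; rewrite /Rinv Iu.
have Pv : (0 < wS wt (aset v))%R by move: Rv; rewrite /Rinv Iv.
set U := aset u in Hu Pu *; set V := aset v in Hv Pv *.
have -> : piq wt K u = mk wt K (Some U) by rewrite /piq Iu.
have -> : piq wt K v = mk wt K (Some V) by rewrite /piq Iv.
case D: [disjoint U & V].
  have D' : forall c, c \in U -> c \in V -> False.
    by move=> c cu cv; move/disjoint_setI0: D => /setP /(_ c); rewrite in_setI in_set0 cu cv.
  have Hp : (fun c => s7_mul (u c) (v c)) = (fun c => if c \in U :|: V then S7a else S7one).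
    apply: functional_extensionality => c; rewrite (Hu c) (Hv c) in_setU.
    case cu: (c \in U); case cv: (c \in V) => //; by case: (D' c cu cv).
  have wU := @wSU _ wt _ _ D.
  rewrite Hp piq_set; split; first by apply: Rinv_set; rewrite wU; lia.
  rewrite /mulq !val_mk /=.
  case Gu: (goodW wt K U); case Gv: (goodW wt K V) => /=.
  - by rewrite D.
  - apply: val_inj; rewrite !val_mk /= /goodW wU.
    case: ifP => // H; exfalso; move: Gv Pu Pv H; rewrite /goodW; lia.
  - apply: val_inj; rewrite !val_mk /= /goodW wU.
    case: ifP => // H; exfalso; move: Gu Pu Pv H; rewrite /goodW; lia.
  - apply: val_inj; rewrite !val_mk /= /goodW wU.
    case: ifP => // H; exfalso; move: Gu Pu Pv H; rewrite /goodW; lia.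
move/negbT: D; rewrite -setI_eq0 => /set0Pn [c]; rewrite in_setI => /andP [cu cv].
have Hs : s7_mul (u c) (v c) = S7inf by rewrite (Hu c) (Hv c) cu cv.
split; first exact: (Rinv_inf wt Hs).
rewrite (piq_inf wt K Hs) /mulq !val_mk /=.
have ND : [disjoint U & V] = false.
  apply/negbTE; rewrite -setI_eq0; apply/set0Pn; exists c; by rewrite in_setI cu cv.
apply: val_inj; rewrite val_mk /=.
by case: (goodW wt K U); case: (goodW wt K V); rewrite /= ?ND.
Qed.

Definition Ev n wt K (w : nat -> @qT n wt K) (t : term) : 'I_n.+1 -> s7 :=
  fun c => @eval S7 (fun i => vec wt K (w i) c) t.

Lemma QV n wt K (w : nat -> @qT n wt K) t :
  Rinv wt (Ev w t) /\ piq wt K (Ev w t) = @eval (Qalg wt K) w t.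
Proof.
elim: t => [i|s [Rs Ps] u [Ru Pu]|s [Rs Ps] u [Ru Pu]].
- by split; [apply: vecR | apply: pi_vec].
- have [H1 H2] := addR K Rs Ru; split; first exact: H1.
  by rewrite /= -Ps -Pu -H2.
- have [H1 H2] := mulR K Rs Ru; split; first exact: H1.
  by rewrite /= -Ps -Pu -H2.
Qed.

Lemma Q_VS7 n wt K : in_VS7 (@Qalg n wt K).
Proof.
move=> s t H w; rewrite -(QV w s).2 -(QV w t).2; congr piq.
apply: functional_extensionality => c; exact: H.
Qed.

Lemma mulq_sq n wt K (x : @qT n wt K) : mulq wt K x x = q0 wt K.
Proof.
case: x => [[W|] Hv]; last by apply: val_inj; rewrite /mulq val_mk.
apply: val_inj; rewrite /mulq val_mk /=.
case D: [disjoint W & W]; last by [].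
exfalso; have W0 : W = set0 by apply/eqP; rewrite -setI_eq0 setIid in D.
move: Hv; rewrite /= /goodW W0 wS0 ltxx //.
Qed.

Lemma Q_N n wt K : in_N (@Qalg n wt K).
Proof.
split; first exact: Q_VS7.
by move=> w /=; rewrite mulq_sq mulq0l.
Qed.

Lemma Q_prodv n wt K (w : nat -> @qT n wt K) s j :
  @eval (Qalg wt K) w (prodv s j) = q0 wt K \/
  exists W, val (@eval (Qalg wt K) w (prodv s j)) = Some W /\ (j.+1%:Z <= wS wt W)%R.
Proof.
elim: j => [|j IH] /=.
  case: (w s) => [[W|] Hv]; last by left; apply: val_inj.
  right; exists W; split => //; move: Hv => /andP [H _]; lia.
case: IH => [->|[W [HW Hj]]]; first by left; rewrite mulq0l.
case E: (w (s + j.+1)) => [[V|] Hv]; last first.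
  by left; rewrite (_ : exist _ None Hv = q0 wt K) ?mulq0r //; apply: val_inj.
rewrite /mulq HW /=.
case: ifP => D; last by left; apply: val_inj; rewrite val_mk.
rewrite val_mk /=; case: ifP => G; last by left; apply: val_inj; rewrite val_mk /= G.
right; exists (W :|: V); split; first by [].
rewrite (@wSU _ wt _ _ D); have := Hv; move=> /andP [H _]; lia.
Qed.

Lemma Q_Nk n wt K (k : nat) : 1 <= k -> (K < k%:Z)%R -> in_Nk k (@Qalg n wt K).
Proof.
move=> k1 Kk; split; first exact: Q_N.
have Z : forall (w : nat -> @qT n wt K) s, @eval (Qalg wt K) w (prodv s k.-1) = q0 wt K.
  move=> w s; case: (Q_prodv w s k.-1) => // [[W [HW Hj]]].
  have := valP (@eval (Qalg wt K) w (prodv s k.-1)); rewrite HW /= /goodW.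
  move: Hj; rewrite prednK //; lia.
by move=> w; rewrite !Z.
Qed.

Set Implicit Arguments.
Unset Strict Implicit.

Fixpoint P (t : term) : seq (seq nat) :=
  match t with
  | Var n => [:: [:: n]]
  | Add s u => P s ++ P u
  | Mul s u => [seq m ++ m' | m <- P s, m' <- P u]
  end.

Definition pm (v : nat -> s7) (m : seq nat) : s7 :=
  foldr (fun x acc => s7_mul (v x) acc) S7one m.

Fixpoint agg (l : seq s7) : s7 :=
  match l with
  | [::] => S7one
  | [:: y] => y
  | y :: l' => s7_add y (agg l')
  end.

Lemma agg_cons y l : l != [::] -> agg (y :: l) = s7_add y (agg l).
Proof. by case: l. Qed.

Lemma aggD l1 l2 : l1 != [::] -> l2 != [::] -> agg (l1 ++ l2) = s7_add (agg l1) (agg l2).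
Proof.
elim: l1 => [|y l1 IH] // _ n2.
case: l1 IH => [|z l1] IH; first by rewrite cat_cons cat0s agg_cons.
rewrite cat_cons (agg_cons y) // IH // (@agg_cons y (z :: l1)) //.
by case: y; case: (agg (z :: l1)); case: (agg l2).
Qed.

Lemma aggMap x l : l != [::] -> agg (map (s7_mul x) l) = s7_mul x (agg l).
Proof.
elim: l => [|y l IH] // _.
case: l IH => [|z l] IH //.
rewrite map_cons (agg_cons (s7_mul x y)) // IH // (@agg_cons y (z :: l)) //.
by clear IH; case: x; case: y; case: (agg (z :: l)).
Qed.

Lemma aggM l1 l2 : l1 != [::] -> l2 != [::] ->
  agg [seq s7_mul x y | x <- l1, y <- l2] = s7_mul (agg l1) (agg l2).
Proof.
elim: l1 => [|y l1 IH] // _ n2.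
rewrite allpairs_cons.
case: l1 IH => [|z l1] IH; first by rewrite /= cats0 aggMap.
have nm : [seq s7_mul y y0 | y0 <- l2] != [::] by rewrite -size_eq0 size_map size_eq0.
have na : [seq s7_mul x y0 | x <- z :: l1, y0 <- l2] != [::].
  by rewrite -size_eq0 size_allpairs /= muln_eq0 /= size_eq0.
rewrite aggD // aggMap // IH // (@agg_cons y (z :: l1)) //.
by clear IH nm na; case: y; case: (agg (z :: l1)); case: (agg l2).
Qed.

Lemma pm_cat v m m' : pm v (m ++ m') = s7_mul (pm v m) (pm v m').
Proof.
elim: m => [|x m IH] /=; first by case: (pm v m').
by rewrite IH; case: (v x); case: (pm v m); case: (pm v m').
Qed.

Lemma P_nil t : P t != [::].
Proof.
elim: t => [n|s Hs u Hu|s Hs u Hu] //=.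
  by case: (P s) Hs.
by rewrite -size_eq0 size_allpairs -lt0n muln_gt0 !lt0n !size_eq0 Hs Hu.
Qed.

Lemma P_mono t : all (fun m => m != [::]) (P t).
Proof.
elim: t => [n|s Hs u Hu|s Hs u Hu] //=; first by rewrite all_cat Hs Hu.
apply/allP => m /allpairsP [[m1 m2] [/= H1 H2 ->]].
by move/allP: Hs => /(_ _ H1); case: m1 H1.
Qed.

Lemma CHAR v t : @eval S7 v t = agg (map (pm v) (P t)).
Proof.
elim: t => [n|s Hs u Hu|s Hs u Hu] /=.
- by case: (v n).
- by rewrite map_cat aggD ?Hs ?Hu // -size_eq0 size_map size_eq0 P_nil.
- rewrite map_allpairs.
  have -> : [seq pm v (x ++ y) | x <- P s, y <- P u] =
            [seq s7_mul x y | x <- map (pm v) (P s), y <- map (pm v) (P u)].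
    by rewrite allpairs_mapl allpairs_mapr; apply: eq_allpairs => x y; rewrite pm_cat.
  by rewrite aggM ?Hs ?Hu // -size_eq0 size_map size_eq0 P_nil.
Qed.

Lemma agg_a l : l != [::] -> (agg l == S7a) = all (fun y => y == S7a) l.
Proof.
elim: l => [|y l IH] // _.
case: l IH => [|z l] IH; first by rewrite /= andbT.
rewrite (@agg_cons y (z :: l)) //.
transitivity ((y == S7a) && (agg (z :: l) == S7a)).
  by clear IH; case: y; case: (agg (z :: l)).
by rewrite IH.
Qed.

Lemma agg_1 l : l != [::] -> (agg l == S7one) = all (fun y => y == S7one) l.
Proof.
elim: l => [|y l IH] // _.
case: l IH => [|z l] IH; first by rewrite /= andbT.
rewrite (@agg_cons y (z :: l)) //.
transitivity ((y == S7one) && (agg (z :: l) == S7one)).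
  by clear IH; case: y; case: (agg (z :: l)).
by rewrite IH.
Qed.

Lemma agg_inf l : S7inf \in l -> agg l = S7inf.
Proof.
elim: l => [|y l IH] //.
case: l IH => [|z l] IH; first by rewrite inE => /eqP ->.
rewrite (@agg_cons y (z :: l)) // in_cons => /orP [/eqP <-|/IH ->].
  by case: (agg (z :: l)).
by case: y.
Qed.

Lemma agg_idem l y : y \in l -> s7_add (agg l) y = agg l.
Proof.
elim: l => [|z l IH] //.
case: l IH => [|w l] IH; first by rewrite inE => /eqP ->; case: z.
rewrite (@agg_cons z (w :: l)) // in_cons => /orP [/eqP ->|/IH H].
  by clear IH; case: z; case: (agg (w :: l)).
by rewrite -[in RHS]H; clear IH H; case: z; case: (agg (w :: l)); case: y.
Qed.

Lemma agg_mem l y : agg l != S7inf -> y \in l -> y = agg l.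
Proof.
move=> H Hy; have := agg_idem Hy; clear Hy; move: H; by case: (agg l); case: y.
Qed.

Lemma pm_inf v m x : x \in m -> v x = S7inf -> pm v m = S7inf.
Proof.
elim: m => [|y m IH] //; rewrite in_cons => /orP [/eqP Exy|H] Hv /=.
  by rewrite -Exy Hv; case: (pm v m).
by rewrite (IH H Hv); case: (v y).
Qed.

Lemma pm_one v m : (pm v m == S7one) = all (fun x => v x == S7one) m.
Proof.
elim: m => [|y m IH] //=; rewrite -IH; by case: (v y); case: (pm v m).
Qed.

Lemma pm_ext v v' m : {in m, v =1 v'} -> pm v m = pm v' m.
Proof.
elim: m => [|y m IH] //= H; rewrite H ?mem_head // IH // => x Hx.
by apply: H; rewrite in_cons Hx orbT.
Qed.

Definition chi (A : nat -> bool) : nat -> s7 := fun x => if A x then S7a else S7one.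
Definition code (c : nat) : s7 := match c with 0 => S7one | 1 => S7a | _ => S7inf end.

Lemma pm_chi A m : pm (chi A) m = code (count A m).
Proof.
elim: m => [|y m IH] //=; rewrite IH /chi; case: (A y) => /=.
  by case: (count A m) => [|[|c]].
by case: (count A m) => [|[|c]].
Qed.

Definition occ x t := has (fun m => x \in m) (P t).

Lemma occ_inf v t x : occ x t -> v x = S7inf -> @eval S7 v t = S7inf.
Proof.
move=> /hasP [m Hm Hx] Hv; rewrite CHAR; apply: agg_inf.
by apply/mapP; exists m => //; rewrite (pm_inf Hx Hv).
Qed.

Lemma eval_ext v v' t : (forall x, occ x t -> v x = v' x) ->
  @eval S7 v t = @eval S7 v' t.
Proof.
move=> H; rewrite !CHAR; congr agg; apply/eq_in_map => m Hm.
apply: pm_ext => x Hx; apply: H; apply/hasP; by exists m.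
Qed.

Lemma eval_one v t : (@eval S7 v t = S7one) <-> (forall x, occ x t -> v x = S7one).
Proof.
rewrite CHAR; split.
  move/eqP; rewrite agg_1 ?P_nil; last by rewrite -size_eq0 size_map size_eq0 P_nil.
  move/allP => H x /hasP [m Hm Hx].
  have := H (pm v m) (map_f _ Hm); rewrite pm_one => /allP /(_ x Hx) /eqP //.
move=> H; apply/eqP; rewrite agg_1; last by rewrite -size_eq0 size_map size_eq0 P_nil.
apply/allP => y /mapP [m Hm ->]; rewrite pm_one; apply/allP => x Hx.
apply/eqP; apply: H; apply/hasP; by exists m.
Qed.

Definition Fa (A : nat -> bool) t := all (fun m => count A m == 1) (P t).

Lemma eval_chi_a A t : (@eval S7 (chi A) t == S7a) = Fa A t.
Proof.
rewrite CHAR agg_a; last by rewrite -size_eq0 size_map size_eq0 P_nil.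
rewrite all_map; apply: eq_all => m /=; rewrite pm_chi.
by case: (count A m) => [|[|c]].
Qed.

Set Implicit Arguments.
Unset Strict Implicit.

Definition val3 (A : alg) (a b c : A) : nat -> A :=
  fun i => match i with 0 => a | 1 => b | _ => c end.

Ltac s7brute := let v := fresh "v" in move=> v /=;
  case: (v 0); case: (v 1); case: (v 2); reflexivity.

Notation X0 := (Var 0). Notation X1 := (Var 1). Notation X2 := (Var 2).

Lemma S7_addC : sat S7 (Add X0 X1) (Add X1 X0). Proof. s7brute. Qed.
Lemma S7_addA : sat S7 (Add X0 (Add X1 X2)) (Add (Add X0 X1) X2). Proof. s7brute. Qed.
Lemma S7_addI : sat S7 (Add X0 X0) X0. Proof. s7brute. Qed.
Lemma S7_mulC : sat S7 (Mul X0 X1) (Mul X1 X0). Proof. s7brute. Qed.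
Lemma S7_mulA : sat S7 (Mul X0 (Mul X1 X2)) (Mul (Mul X0 X1) X2). Proof. s7brute. Qed.
Lemma S7_I1 : sat S7 (Add X0 (Mul X1 X1)) (Add (Add X0 X1) (Mul X1 X1)). Proof. s7brute. Qed.



Lemma NaddC A : in_VS7 A -> forall x y : A, aadd x y = aadd y x.
Proof. by move=> HV x y; apply: (HV _ _ S7_addC (val3 x y x)). Qed.
Lemma NaddA A : in_VS7 A -> forall x y z : A, aadd x (aadd y z) = aadd (aadd x y) z.
Proof. by move=> HV x y z; apply: (HV _ _ S7_addA (val3 x y z)). Qed.
Lemma NaddI A : in_VS7 A -> forall x : A, aadd x x = x.
Proof. by move=> HV x; apply: (HV _ _ S7_addI (val3 x x x)). Qed.
Lemma NmulC A : in_VS7 A -> forall x y : A, amul x y = amul y x.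
Proof. by move=> HV x y; apply: (HV _ _ S7_mulC (val3 x y x)). Qed.
Lemma NmulA A : in_VS7 A -> forall x y z : A, amul x (amul y z) = amul (amul x y) z.
Proof. by move=> HV x y z; apply: (HV _ _ S7_mulA (val3 x y z)). Qed.

Lemma Nsq A : in_N A -> forall x y : A, amul (amul x x) y = amul x x.
Proof. by case=> _ H x y; apply: (H (val3 x y x)). Qed.

Lemma Nsqc A : in_N A -> forall x y : A, amul x x = amul y y.
Proof.
move=> HA x y; have HV := HA.1.
by rewrite -(Nsq HA x (amul y y)) NmulC // Nsq.
Qed.

Lemma Nzr A : in_N A -> forall x y : A, amul y (amul x x) = amul x x.
Proof. by move=> HA x y; rewrite NmulC ?Nsq //; case: HA. Qed.

Lemma Nzadd A : in_N A -> forall x y : A, aadd (amul x x) y = amul x x.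
Proof.
move=> HA x y; have HV := HA.1.
have I1 : forall p q : A, aadd p (amul x x) = aadd (aadd p q) (amul x x).
  move=> p q; rewrite (Nsqc HA x q).
  by apply: (HV _ _ S7_I1 (val3 p q q)).
have E : forall p q : A, aadd (amul x x) p = aadd (amul x x) q.
  move=> p q; rewrite (NaddC HV (amul x x) p) (I1 p q) (NaddC HV (amul x x) q) (I1 q p) (NaddC HV q p).
  done.
by rewrite (E y (amul x x)) NaddI.
Qed.

Lemma Nzaddr A : in_N A -> forall x y : A, aadd y (amul x x) = amul x x.
Proof. by move=> HA x y; rewrite NaddC ?Nzadd //; case: HA. Qed.

Lemma zero_by (A : alg) (HA : in_N A) (v : nat -> A) t w (a : A) :
  sat S7 t (Add t w) -> @eval A v w = amul a a -> @eval A v t = amul a a.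
Proof.
move=> H Hw; rewrite (HA.1 _ _ H v) /= Hw; exact: Nzaddr.
Qed.

Fixpoint mterm (m : seq nat) : term :=
  match m with
  | [::] => Var 0
  | [:: x] => Var x
  | x :: m' => Mul (Var x) (mterm m')
  end.

Lemma eval_mterm v m : m != [::] -> @eval S7 v (mterm m) = pm v m.
Proof.
elim: m => [|x m IH] // _; case: m IH => [|y m] IH; first by rewrite /=; case: (v x).
transitivity (s7_mul (v x) (@eval S7 v (mterm (y :: m)))); first by [].
by rewrite IH.
Qed.

Lemma sat_add_mono t m : m \in P t -> sat S7 t (Add t (mterm m)).
Proof.
move=> Hm v /=; rewrite eval_mterm; last by move/allP: (P_mono t) => /(_ _ Hm).
by rewrite CHAR agg_idem // map_f.
Qed.

Definition vl (A : alg) (d : A) (l : seq A) : nat -> A := fun i => nth d l i.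

Lemma N3prod (A : alg) (HA : in_Nk 3 A) (a b c d : A) : amul (amul a b) c = amul d d.
Proof.
have := HA.2 (vl d [:: a; b; c; d; d; d]); rewrite /= => ->.
exact: (Nsq HA.1).
Qed.

Lemma N3prodr (A : alg) (HA : in_Nk 3 A) (a b c d : A) : amul a (amul b c) = amul d d.
Proof. rewrite (NmulA HA.1.1); exact: N3prod. Qed.

Lemma N2prod (A : alg) (HA : in_Nk 2 A) (a b d : A) : amul a b = amul d d.
Proof. by have := HA.2 (vl d [:: a; b; d; d]); rewrite /= => ->. Qed.

Definition good3 (m : seq nat) := (size m == 1) || ((size m == 2) && uniq m).

Lemma mterm_zero3 (A : alg) (HA : in_Nk 3 A) (v : nat -> A) m :
  m != [::] -> ~~ good3 m -> @eval A v (mterm m) = amul (v 0) (v 0).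
Proof.
case: m => [|x [|y [|w r]]] //= _.
  rewrite /good3 /= andbT inE negbK => /eqP <-; exact: (Nsqc HA.1).
move=> _; exact: N3prodr.
Qed.

Definition Fempty t := forall A, ~~ Fa A t.
Definition Z3 t := exists u y, [:: u] \in P t /\ ([:: u; y] \in P t \/ [:: y; u] \in P t).
Definition zc3 t := ~~ all good3 (P t) \/ Fempty t \/ Z3 t.

Lemma occ_ex t : exists x, occ x t.
Proof.
case E: (P t) (P_nil t) (P_mono t) => [|m l] // _ /= /andP [].
case: m E => [|x m] // E _ _; exists x; apply/hasP; exists (x :: m).
  by rewrite E mem_head.
by rewrite mem_head.
Qed.

Lemma noinf_chi v t : @eval S7 v t != S7inf ->
  @eval S7 v t = @eval S7 (chi (fun y => v y == S7a)) t.
Proof.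
move=> H; apply: eval_ext => x Hx; rewrite /chi.
case E: (v x) => //; by rewrite (occ_inf Hx E) in H.
Qed.

Lemma zero3 (A : alg) (HA : in_Nk 3 A) (v : nat -> A) t :
  zc3 t -> @eval A v t = amul (v 0) (v 0).
Proof.
case=> [|[]].
- case/allPn => m Hm Hg; apply: (@zero_by _ HA.1 v t (mterm m)).
    exact: sat_add_mono.
  apply: mterm_zero3 => //; by move/allP: (P_mono t) => /(_ _ Hm).
- move=> Hf; case: (occ_ex t) => x Hx.
  apply: (@zero_by _ HA.1 v t (Mul (Var x) (Var x))); last exact: (Nsqc HA.1).
  move=> v7 /=.
  case Ex: (v7 x); first by rewrite (occ_inf Hx Ex).
  + case Eg: (@eval S7 v7 t) => //.
    * have := Hf (fun y => v7 y == S7a); rewrite -eval_chi_a -noinf_chi ?Eg //.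
    * have := proj1 (eval_one v7 t) Eg x Hx; by rewrite Ex.
  + case Eg: (@eval S7 v7 t) => //.
    have := Hf (fun y => v7 y == S7a); rewrite -eval_chi_a -noinf_chi ?Eg //.
- case=> u [y [Hu Huy]].
  apply: (@zero_by _ HA.1 v t (Mul (Var u) (Mul (Var y) (Var y)))); last first.
    rewrite /= (Nzr HA.1); apply: (Nsqc HA.1 (v y) (v 0)).
  move=> v7 /=; rewrite CHAR; set L := map _ _.
  case Eg: (agg L); first by case: (s7_mul (v7 u) (s7_mul (v7 y) (v7 y))).
  all: have N : agg L != S7inf by rewrite Eg.
  all: have H1 := agg_mem N (map_f (pm v7) Hu); rewrite /= in H1.
  all: case: Huy => Huy; have H2 := agg_mem N (map_f (pm v7) Huy); rewrite /= in H2.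
  all: move: H1 H2; rewrite Eg.
  all: by case: (v7 u); case: (v7 y).
Qed.

Set Implicit Arguments.
Unset Strict Implicit.

Definition Astar (A : nat -> bool) t : nat -> bool := fun x => ~~ A x || ([:: x] \in P t).

Lemma nz3 t : ~ zc3 t -> forall A, Fa A t -> Fa (Astar A t) t.
Proof.
move=> Hz A HF.
have Hg : all good3 (P t) by case: (boolP (all good3 (P t))) => // H; exfalso; apply: Hz; left.
have HZ : ~ Z3 t by move=> H; apply: Hz; right; right.
apply/allP => m Hm; move/allP: HF => /(_ m Hm); move/allP: Hg => /(_ m Hm).
case: m Hm => [|x [|y [|w r]]] //= Hm.
  by rewrite /Astar Hm orbT; case: (A x).
rewrite /good3 /= andbT inE => Hxy.
have Nx : [:: x] \notin P t by apply/negP => Hx; apply: HZ; exists x, y; split => //; left.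
have Ny : [:: y] \notin P t by apply/negP => Hy; apply: HZ; exists y, x; split => //; right.
rewrite /Astar (negbTE Nx) (negbTE Ny) !orbF.
by case: (A x); case: (A y).
Qed.

Lemma Fa_ext A A' t : (forall x, occ x t -> A x = A' x) -> Fa A t = Fa A' t.
Proof.
move=> H; rewrite -!eval_chi_a (@eval_ext (chi A) (chi A')) // => x Hx.
by rewrite /chi H.
Qed.

Lemma S7_transfer s t : (forall x, occ x s = occ x t) -> (forall A, Fa A s = Fa A t) ->
  sat S7 s t.
Proof.
move=> Ho HF v.
case: (classic (exists x, occ x s /\ v x = S7inf)) => [[x [Hx Hv]]|Hn].
  rewrite (occ_inf Hx Hv) (@occ_inf v t x) //; by rewrite -Ho.
set As := fun y => v y == S7a.
have Ev : forall u, (forall x, occ x u -> occ x s) -> @eval S7 v u = @eval S7 (chi As) u.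
  move=> u Hu; apply: eval_ext => x Hx; rewrite /chi /As.
  case E: (v x) => //; exfalso; apply: Hn; exists x; split => //; exact: Hu.
rewrite (Ev s) // (Ev t); last by move=> x; rewrite Ho.
case Es: (@eval S7 (chi As) s).
- case Et: (@eval S7 (chi As) t) => //.
  + by move/eqP: Et; rewrite eval_chi_a -HF -eval_chi_a Es.
  + move: Et => /eval_one Et; suff : @eval S7 (chi As) s = S7one by rewrite Es.
    apply/eval_one => x Hx; apply: Et; by rewrite -Ho.
- by apply/esym/eqP; rewrite eval_chi_a -HF -eval_chi_a Es.
- move: Es => /eval_one Es; apply/esym/eval_one => x Hx; apply: Es; by rewrite Ho.
Qed.

Definition wt3 : 'I_2 -> int := fun _ => 1%R.
Definition B3 : alg := @Qalg 1 wt3 (Posz 2).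
Definition bval3 (A1 A2 : nat -> bool) : nat -> @qT 1 wt3 (Posz 2) :=
  fun x => mk wt3 (Posz 2) (Some [set c : 'I_2 | if c == ord0 then A1 x else A2 x]).
Definition full3 : @qT 1 wt3 (Posz 2) := mk wt3 (Posz 2) (Some setT).

Lemma wS3 (W : {set 'I_2}) : wS wt3 W = Posz #|W|.
Proof. by rewrite /wS /wt3 sumr_const natz. Qed.

Lemma good3W (W : {set 'I_2}) : W != set0 -> goodW wt3 (Posz 2) W.
Proof.
move=> H; rewrite /goodW wS3; have := max_card W; rewrite card_ord.
move: H; rewrite -card_gt0; lia.
Qed.

Lemma vec_bval3 A1 A2 x c : A1 x || A2 x ->
  vec wt3 (Posz 2) (bval3 A1 A2 x) c = chi (if c == ord0 then A1 else A2) x.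
Proof.
move=> H; rewrite /vec /bval3 val_mk /= good3W; last first.
  apply/set0Pn; case: (boolP (A1 x)) => H1; first by exists ord0; rewrite inE.
  exists (@Ordinal 2 1 isT); by rewrite inE /= (negbTE H1) /= in H *.
by rewrite inE /chi; case: (c == ord0).
Qed.

Lemma Ev_bval3 A1 A2 t c : (forall x, A1 x || A2 x) ->
  Ev (bval3 A1 A2) t c = @eval S7 (chi (if c == ord0 then A1 else A2)) t.
Proof.
move=> H; rewrite /Ev (_ : (fun i => vec wt3 (Posz 2) (bval3 A1 A2 i) c) =
   chi (if c == ord0 then A1 else A2)) //.
apply: functional_extensionality => x; exact: vec_bval3.
Qed.

Lemma B3_full A1 A2 t : (forall x, A1 x || A2 x) -> Fa A1 t -> Fa A2 t ->
  @eval B3 (bval3 A1 A2) t = full3.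
Proof.
move=> H F1 F2; rewrite -(QV (bval3 A1 A2) t).2.
have -> : Ev (bval3 A1 A2) t = (fun c => if c \in setT then S7a else S7one).
  apply: functional_extensionality => c; rewrite in_setT Ev_bval3 //.
  apply/eqP; rewrite eval_chi_a; by case: (c == ord0).
by rewrite piq_set.
Qed.

Lemma val_full3 : val full3 = Some setT.
Proof. by rewrite /full3 val_mk /= good3W //; apply/set0Pn; exists ord0. Qed.

Lemma B3_back A1 A2 t : (forall x, A1 x || A2 x) ->
  @eval B3 (bval3 A1 A2) t = full3 -> Fa A1 t.
Proof.
move=> H; rewrite -(QV (bval3 A1 A2) t).2 => /(congr1 val); rewrite val_full3 /piq.
case: ifP => //= _; rewrite val_mk /=; case: ifP => // _ [] /setP /(_ ord0).
rewrite in_setT inE Ev_bval3 // eqxx eval_chi_a //.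
Qed.

Lemma B3_Nk : in_Nk 3 B3.
Proof. by apply: Q_Nk. Qed.

Lemma full3_q0 : full3 <> q0 wt3 (Posz 2).
Proof. by move/(congr1 val); rewrite val_full3. Qed.

Lemma B3_sq (x : @qT 1 wt3 (Posz 2)) : @amul B3 x x = q0 wt3 (Posz 2).
Proof. exact: mulq_sq. Qed.

Lemma exFa t : ~ Fempty t -> exists A, Fa A t.
Proof.
move=> H; apply: NNPP => H'; apply: H => A; apply/negP => HA; apply: H'; by exists A.
Qed.

Lemma zB3 s A1 A2 : zc3 s -> @eval B3 (bval3 A1 A2) s = q0 wt3 (Posz 2).
Proof. by move=> Hs; rewrite (zero3 B3_Nk) //; apply: B3_sq. Qed.

Lemma main3 (A : alg) (HA : in_Nk 3 A) s t : sat B3 s t -> sat A s t.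
Proof.
move=> HB.
have oneway : forall s t, sat B3 s t -> zc3 s -> ~ zc3 t -> False.
  move=> s' t' HB' Zs Zt.
  have Ft : ~ Fempty t' by move=> H; apply: Zt; right; left.
  case: (exFa Ft) => A0 HA0.
  have Hc : forall x, A0 x || Astar A0 t' x by move=> x; rewrite /Astar; case: (A0 x).
  have := HB' (bval3 A0 (Astar A0 t')).
  rewrite (zB3 _ _ Zs) (B3_full Hc HA0 (nz3 Zt HA0)) => E; by apply: full3_q0.
case: (classic (zc3 s)) => Zs; case: (classic (zc3 t)) => Zt.
- by move=> v; rewrite !(zero3 HA).
- by case: (oneway s t HB Zs Zt).
- have HB' : sat B3 t s by move=> w; rewrite HB.
  by case: (oneway t s HB' Zt Zs).
have trans : forall s t, sat B3 s t -> ~ zc3 s -> forall A0, Fa A0 s -> Fa A0 t.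
  move=> s' t' HB' Zs' A0 F.
  have Hc : forall x, A0 x || Astar A0 s' x by move=> x; rewrite /Astar; case: (A0 x).
  have := HB' (bval3 A0 (Astar A0 s')); rewrite (B3_full Hc F (nz3 Zs' F)) => E.
  exact: (B3_back Hc (esym E)).
have HBs : sat B3 t s by move=> w; rewrite HB.
have vars1 : forall s t, (forall A0, Fa A0 s = Fa A0 t) -> ~ zc3 s ->
    forall x, occ x s -> occ x t.
  move=> s' t' HF Zs' x Hx; apply: NNPP => Hnt.
  have Fs : ~ Fempty s' by move=> H; apply: Zs'; right; left.
  case: (exFa Fs) => A0 HA0.
  pose A1 := fun y => if y == x then ~~ A0 x else A0 y.
  have F1 : Fa A1 s'.
    rewrite HF (@Fa_ext A1 A0) -?HF // => y Hy; rewrite /A1.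
    case: eqP => // Ey; by exfalso; apply: Hnt; rewrite -Ey.
  have Hg : all good3 (P s') by case: (boolP (all good3 (P s'))) => // H; exfalso; apply: Zs'; left.
  case/hasP: Hx => m Hm Hxm.
  move/allP: HA0 => /(_ m Hm); move/allP: F1 => /(_ m Hm); move/allP: Hg => /(_ m Hm).
  case: m Hm Hxm => [|a [|b [|w r]]] //= _.
    by rewrite inE => /eqP <-; rewrite /A1 eqxx; case: (A0 x).
  rewrite !inE => /orP [/eqP <-|/eqP <-]; rewrite /good3 /= andbT inE => Hab; rewrite /A1 eqxx.
    have Hba : (b == x) = false by apply/negbTE; rewrite eq_sym.
    by rewrite Hba; case: (A0 x); case: (A0 b).
  by rewrite (negbTE Hab); case: (A0 x); case: (A0 a).
have HF : forall A0, Fa A0 s = Fa A0 t.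
  by move=> A0; apply/idP/idP; [apply: trans | apply: (trans t s HBs Zt)].
apply: HA.1.1; apply: S7_transfer => // x; apply/idP/idP; first exact: vars1.
by apply: (vars1 t s) => // A0; rewrite HF.
Qed.

Set Implicit Arguments.
Unset Strict Implicit.

Definition wt2 : 'I_1 -> int := fun _ => 1%R.
Definition B2 : alg := @Qalg 0 wt2 (Posz 1).
Definition full2 : @qT 0 wt2 (Posz 1) := mk wt2 (Posz 1) (Some setT).
Definition bval2 (D : nat -> bool) : nat -> @qT 0 wt2 (Posz 1) :=
  fun x => if D x then full2 else q0 wt2 (Posz 1).

Lemma val_full2 : val full2 = Some setT.
Proof.
rewrite /full2 val_mk /= /goodW /wS /wt2 sumr_const natz cardsT card_ord //.
Qed.

Lemma full2_q0 : full2 <> q0 wt2 (Posz 1).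
Proof. by move/(congr1 val); rewrite val_full2. Qed.

Lemma B2_Nk : in_Nk 2 B2.
Proof. by apply: Q_Nk. Qed.

Definition zc2 t := has (fun m => 1 < size m) (P t).

Lemma zero2 (A : alg) (HA : in_Nk 2 A) (v : nat -> A) t :
  zc2 t -> @eval A v t = amul (v 0) (v 0).
Proof.
case/hasP => m Hm Hs; apply: (@zero_by _ HA.1 v t (mterm m)).
  exact: sat_add_mono.
case: m Hm Hs => [|x [|y r]] //= _ _; exact: N2prod.
Qed.

Lemma Fa_single t A : ~~ zc2 t -> Fa A t = all (fun x => A x) (flatten (P t)).
Proof.
move=> Hz.
have H1 : forall m, m \in P t -> exists y, m = [:: y].
  move=> m Hm; move/hasPn: Hz => /(_ m Hm); move/allP: (P_mono t) => /(_ m Hm).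
  case: m Hm => [|x [|y r]] //= _ _ _; by exists x.
apply/allP/allP => [H x /flattenP [m Hm Hx]|H m Hm].
  case: (H1 m Hm) => y Ey; move: (H m Hm) Hx; rewrite Ey inE => /= + /eqP ->.
  by case: (A y).
case: (H1 m Hm) => y Ey; rewrite Ey /= H //; apply/flattenP; exists m => //.
by rewrite Ey mem_head.
Qed.

Lemma occ_flat x t : occ x t = (x \in flatten (P t)).
Proof.
rewrite /occ; apply/hasP/flattenP => [[m Hm Hx]|[m Hm Hx]]; by exists m.
Qed.

Lemma Ev2 (D : nat -> bool) t : (forall x, occ x t -> D x) -> ~~ zc2 t -> @eval B2 (bval2 D) t = full2.
Proof.
move=> HD Hz; rewrite -(QV (bval2 D) t).2.
have -> : Ev (bval2 D) t = (fun c => if c \in setT then S7a else S7one).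
  apply: functional_extensionality => c; rewrite in_setT /Ev.
  rewrite (@eval_ext _ (chi (fun _ => true))); last first.
    move=> x Hx; rewrite /vec /bval2 HD // val_full2 in_setT //.
  apply/eqP; rewrite eval_chi_a Fa_single //; by apply/allP.
by rewrite piq_set.
Qed.

Lemma Ev2inf (D : nat -> bool) t x : occ x t -> ~~ D x -> @eval B2 (bval2 D) t = q0 wt2 (Posz 1).
Proof.
move=> Hx HD; rewrite -(QV (bval2 D) t).2; apply: (@piq_inf _ _ _ _ ord0).
by rewrite /Ev (occ_inf Hx) // /vec /bval2 (negbTE HD).
Qed.

Lemma zB2 s (D : nat -> bool) : zc2 s -> @eval B2 (bval2 D) s = q0 wt2 (Posz 1).
Proof. by move=> Hs; rewrite (zero2 B2_Nk) //; apply: mulq_sq. Qed.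

Lemma main2 (A : alg) (HA : in_Nk 2 A) s t : sat B2 s t -> sat A s t.
Proof.
move=> HB.
have HBs : sat B2 t s by move=> w; rewrite HB.
have oneway : forall s t, sat B2 s t -> zc2 s -> ~~ zc2 t -> False.
  move=> s' t' HB' Zs Zt.
  have := HB' (bval2 (fun _ => true)); rewrite (zB2 _ Zs) Ev2 // => E.
  by apply: full2_q0.
case Zs: (zc2 s); case Zt: (zc2 t).
- by move=> v; rewrite !(zero2 HA).
- by case: (oneway s t HB); rewrite ?Zt.
- by case: (oneway t s HBs); rewrite ?Zs.
have vars1 : forall s t, sat B2 s t -> ~~ zc2 s -> ~~ zc2 t ->
    forall x, occ x s -> occ x t.
  move=> s' t' HB' Zs' Zt' x Hx; apply/negPn/negP => Hnt.
  have := HB' (bval2 (fun y => y != x)).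
  rewrite (Ev2inf Hx) ?eqxx // Ev2 // => [E|y Hy]; first by apply: full2_q0.
  by apply/eqP => Ey; move: Hnt; rewrite -Ey Hy.
have Ho : forall x, occ x s = occ x t.
  move=> x; apply/idP/idP; [apply: vars1 | apply: vars1 HBs _ _ _]; by rewrite ?Zs ?Zt.
apply: HA.1.1; apply: S7_transfer => // A0.
rewrite !Fa_single ?Zs ?Zt //; apply: eq_all_r => x; by rewrite -!occ_flat Ho.
Qed.

Set Implicit Arguments.
Unset Strict Implicit.

Definition mono (m i j : nat) : term := Mul (Mul (Var i) (Var j)) (Var (m + i * m + j)).

Definition pr (m : nat) : seq (nat * nat) :=
  [seq p <- [seq (i, j) | i <- iota 0 m, j <- iota 0 m] | p.1 < p.2].

Definition sumt (m : nat) (l : seq (nat * nat)) : term :=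
  foldr (fun p acc => Add (mono m p.1 p.2) acc) (mono m 0 1) l.

Definition sm m := sumt m (pr m).

Lemma mem_pr m i j : i < j -> j < m -> (i, j) \in pr m.
Proof.
move=> ij jm; rewrite mem_filter /= ij /=.
apply: (allpairs_f (fun i j => (i, j))); rewrite mem_iota /=; lia.
Qed.

Lemma sumt_zero (A : alg) (HA : in_N A) (v : nat -> A) m l p0 (z : A) :
  p0 \in l -> @eval A v (mono m p0.1 p0.2) = amul z z ->
  @eval A v (sumt m l) = amul z z.
Proof.
elim: l => [|p l IH] //.
have -> : @eval A v (sumt m (p :: l)) =
  aadd (@eval A v (mono m p.1 p.2)) (@eval A v (sumt m l)) by [].
rewrite in_cons => /orP [/eqP <- H|H1 H2].
  by rewrite H Nzadd.
by rewrite IH // Nzaddr.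
Qed.

Lemma B_side (A : alg) (HA : in_N A) m (v : nat -> A) i j :
  i < j -> j < m -> v i = v j -> @eval A v (sm m) = amul (v 0) (v 0).
Proof.
move=> ij jm E; apply: (sumt_zero HA (p0 := (i, j))); first exact: mem_pr.
rewrite /= -E (Nsq HA); exact: (Nsqc HA).
Qed.

Lemma pigeon (T : finType) (v : nat -> T) : exists i j, i < j < #|T|.+2 /\ v i = v j.
Proof.
apply: NNPP => H.
have inj : injective (fun i : 'I_(#|T|.+2) => v i).
  move=> i j E; apply: val_inj => /=; apply/eqP; apply: NNPP => Ne.
  case: (ltngtP i j) => [ij|ji|/eqP //].
  - apply: H; exists i, j; by rewrite ij ltn_ord.
  - apply: H; exists j, i; by rewrite ji ltn_ord.
have := leq_card _ inj; rewrite card_ord; lia.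
Qed.

Unset Implicit Arguments.
Definition wtn (m : nat) : 'I_m.+1 -> int :=
  fun c => if c == ord0 then (Posz 3 - Posz m)%R else 1%R.
Definition cc (m i : nat) : 'I_m.+1 := inord i.+1.
Definition Xv m K i : @qT m (wtn m) K := mk (wtn m) K (Some [set cc m i]).
Definition Yv m K i j : @qT m (wtn m) K := mk (wtn m) K (Some (setT :\ cc m i :\ cc m j)).
Definition wq m K (x : nat) : @qT m (wtn m) K :=
  if x < m then Xv m K x else Yv m K ((x - m) %/ m) ((x - m) %% m).

Set Implicit Arguments.

Lemma cc_val m i : i < m -> val (cc m i) = i.+1.
Proof. by move=> H; rewrite /cc; apply: inordK. Qed.

Lemma cc_neq0 m i : i < m -> (cc m i == ord0) = false.
Proof. move=> H; apply/negbTE; apply/eqP => /(congr1 val); by rewrite cc_val. Qed.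

Lemma cc_inj m i j : i < m -> j < m -> (cc m i == cc m j) = (i == j).
Proof.
move=> Hi Hj; apply/eqP/eqP => [/(congr1 val)|->] //; rewrite !cc_val //; by case.
Qed.

Lemma wS_D1 n wt (W : {set 'I_n.+1}) a : a \in W ->
  wS wt W = (wS wt (W :\ a) + wt a)%R.
Proof.
move=> Ha; rewrite /wS (bigD1 a) //= addrC; congr (_ + _)%R.
apply: eq_bigl => c; by rewrite !inE andbC.
Qed.

Lemma wS_set1 n wt (a : 'I_n.+1) : wS wt [set a] = wt a.
Proof. by rewrite /wS big_set1. Qed.

Lemma wS_setT m : wS (wtn m) setT = Posz 3.
Proof.
rewrite /wS (eq_bigl (fun _ => true)) => [|c]; last by rewrite in_setT.
rewrite big_ord_recl /wtn eqxx.
rewrite (eq_bigr (fun _ => 1%R)) => [|i _] //.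
rewrite big_const_ord iter_addr addr0 natz; lia.
Qed.

Lemma val_Xv m K i : i < m -> (0 < K)%R -> val (Xv m K i) = Some [set cc m i].
Proof.
move=> Hi HK; rewrite /Xv val_mk /= /goodW wS_set1 /wtn cc_neq0 //.
by rewrite ifT //; lia.
Qed.

Lemma wS_Y m i j : i < j -> j < m ->
  wS (wtn m) (setT :\ cc m i :\ cc m j) = 1%R.
Proof.
move=> ij jm.
have im : i < m by lia.
have w1 : wtn m (cc m i) = 1%R by rewrite /wtn cc_neq0.
have w2 : wtn m (cc m j) = 1%R by rewrite /wtn cc_neq0.
have E1 : wS (wtn m) setT = (wS (wtn m) (setT :\ cc m i) + wtn m (cc m i))%R.
  by apply: wS_D1; rewrite in_setT.
have E2 : wS (wtn m) (setT :\ cc m i) =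
    (wS (wtn m) (setT :\ cc m i :\ cc m j) + wtn m (cc m j))%R.
  by apply: wS_D1; rewrite !inE cc_inj //; lia.
move: E1 E2; rewrite wS_setT w1 w2; lia.
Qed.

Lemma val_Yv m K i j : i < j -> j < m -> (0 < K)%R ->
  val (Yv m K i j) = Some (setT :\ cc m i :\ cc m j).
Proof.
move=> ij jm HK; rewrite /Yv val_mk /= /goodW wS_Y //.
by rewrite ifT //; lia.
Qed.

Lemma wq_x m K i : i < m -> wq m K i = Xv m K i.
Proof. by move=> H; rewrite /wq H. Qed.

Lemma wq_y m K i j : i < j -> j < m -> wq m K (m + i * m + j) = Yv m K i j.
Proof.
move=> ij jm; rewrite /wq ifF; last by lia.
have -> : m + i * m + j - m = i * m + j by lia.
rewrite divnMDl ?divn_small ?modnMDl ?modn_small ?addn0 //; lia.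
Qed.

Lemma vecX m K i c : i < m -> (0 < K)%R ->
  vec (wtn m) K (Xv m K i) c = if c == cc m i then S7a else S7one.
Proof. by move=> Hi HK; rewrite /vec val_Xv // inE. Qed.

Lemma vecY m K i j c : i < j -> j < m -> (0 < K)%R ->
  vec (wtn m) K (Yv m K i j) c = if (c != cc m j) && (c != cc m i) then S7a else S7one.
Proof. by move=> ij jm HK; rewrite /vec val_Yv // !inE andbT. Qed.

Lemma mono_a m K i j c : i < j -> j < m -> (0 < K)%R ->
  @eval S7 (fun x => vec (wtn m) K (wq m K x) c) (mono m i j) = S7a.
Proof.
move=> ij jm HK; have im : i < m by lia.
rewrite /= wq_x // wq_x // wq_y // vecX // vecX // vecY //.
have Nij : (cc m i == cc m j) = false by rewrite cc_inj //; apply/negbTE; lia.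
case: (c =P cc m i) => [->|ni]; case: (c =P cc m j) => [E|nj] //=.
all: by rewrite ?Nij.
Qed.

Lemma sumt_a (v : nat -> s7) m l :
  (forall p, p \in l -> @eval S7 v (mono m p.1 p.2) = S7a) ->
  @eval S7 v (mono m 0 1) = S7a -> @eval S7 v (sumt m l) = S7a.
Proof.
move=> H H0; elim: l H => [|p l IH] H //.
have -> : @eval S7 v (sumt m (p :: l)) =
  s7_add (@eval S7 v (mono m p.1 p.2)) (@eval S7 v (sumt m l)) by [].
rewrite H ?mem_head // IH // => q Hq; apply: H; by rewrite in_cons Hq orbT.
Qed.

Lemma Q_neg m K : 1 < m -> (Posz 3 <= K)%R ->
  ~ sat (@Qalg m (wtn m) K) (sm m) (Mul (Var 0) (Var 0)).
Proof.
move=> Hm HK H; have := H (wq m K).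
have HK0 : (0 < K)%R by lia.
rewrite [RHS]/= mulq_sq -(QV (wq m K) (sm m)).2.
have -> : Ev (wq m K) (sm m) = (fun c => if c \in setT then S7a else S7one).
  apply: functional_extensionality => c; rewrite in_setT /Ev /sm.
  apply: sumt_a; last by apply: mono_a.
  case=> i j /= Hp; move: Hp; rewrite mem_filter => /andP [/= ij].
  case/allpairsP => [[a b] [Ha Hb [Ea Eb]]]; rewrite /= in Ea Eb; subst a b.
  move: Hb; rewrite mem_iota /= => Hb; apply: mono_a => //; lia.
rewrite piq_set => /(congr1 val); rewrite val_mk /= /goodW wS_setT ifT //; lia.
Qed.

Lemma noFG k : 3 < k -> ~ fin_generated (in_Nk k).
Proof.
move=> Hk [T [ad [mu H]]].
pose B := @Alg T ad mu.
have HB : in_Nk k B by apply/H => s t.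
pose m := #|T|.+2.
have HQ : in_Nk k (@Qalg m (wtn m) (Posz k.-1)) by apply: Q_Nk; lia.
have := (H _).1 HQ => HV.
apply: (@Q_neg m (Posz k.-1)); [rewrite /m; lia | lia |].
apply: HV => v.
case: (pigeon v) => i [j [/andP [ij jm] E]].
by rewrite (B_side HB.1 ij jm E).
Qed.

Set Implicit Arguments.
Unset Strict Implicit.

Lemma inV_Nk k (B : alg) (A : alg) : in_Nk k B -> in_V B A -> in_Nk k A.
Proof.
move=> [[HV HN] HP] H; split; first split.
- by move=> s t Hs; apply: H; apply: HV.
- exact: H.
- exact: H.
Qed.

Lemma fg1 : fin_generated (in_Nk 1).
Proof.
exists (unit : finType), (fun _ _ => tt), (fun _ _ => tt) => A; split.
  move=> HA s t _ v.
  by apply: (HA.2 (vl (@eval A v s) [:: @eval A v s; @eval A v t])).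
move=> H.
pose B := Alg (fun _ _ : unit => tt) (fun _ _ => tt).
have T1 : forall s t, sat B s t by move=> s t v; case: (@eval B v s); case: (@eval B v t).
apply: (@inV_Nk 1 B) => //; split; first split => //; exact: T1.
Qed.


Lemma fg2 : fin_generated (in_Nk 2).
Proof.
exists (@qT 0 wt2 (Posz 1) : finType), (addq wt2 (Posz 1)), (mulq wt2 (Posz 1)) => A.
split; first by move=> HA s t; apply: main2.
exact: inV_Nk B2_Nk.
Qed.

Lemma fg3 : fin_generated (in_Nk 3).
Proof.
exists (@qT 1 wt3 (Posz 2) : finType), (addq wt3 (Posz 2)), (mulq wt3 (Posz 2)) => A.
split; first by move=> HA s t; apply: main3.
exact: inV_Nk B3_Nk.
Qed.

Theorem corollary4p14 (k : nat) : 1 <= k -> (fin_generated (in_Nk k) <-> k <= 3).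
Proof.
move=> k1; case: k k1 => [|[|[|[|k]]]] // _.
- by split => // _; exact: fg1.
- by split => // _; exact: fg2.
- by split => // _; exact: fg3.
- by split => // H; exfalso; apply: (@noFG k.+4).
Qed.
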